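(* Let $\mathcal{C}$ be an $[n,k]_q$ code such that for every $c\in\mathcal{C}\setminus\{0\}$ the entries of $V(c)$ are pairwise distinct. Then there exists a non-zero $r=(r_1,\dots,r_{q-1})\in\mathbb{N}^{q-1}$ such that for every $c\in\mathcal{C}\setminus\{0\}$: $$\sum_{j=1}^{q-1} r_j\left(c[\alpha^{i-j}]-c[\alpha^{\ell-j}]\right)\neq 0\ \text{ for all } 1\le i<\ell\le q-1,\quad\text{and}\quad \sum_{j=1}^{q-1} r_j\left(c[\alpha^{\ell-j}]-c[0]\right)\neq 0\ \text{ for all } 1\le \ell\le q-1.$$
   Context: $\alpha$ is a fixed primitive element of $\mathbb{F}_q$ (exponents modulo $q-1$), $\mathbb{N}=\{0,1,2,\dots\}$. An $[n,k]_q$ code is a $k$-dimensional subspace of $\mathbb{F}_q^n$. For $c\in\mathbb{F}_q^n$, $\beta\in\mathbb{F}_q$, $c[\beta]=|\{l:c_l=\beta\}|$ and $V(c)=(c[\alpha],\dots,c[\alpha^{q-1}],c[0])$. *)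

(* Defs.v *)
From HB Require Import structures.
From mathcomp Require Import all_boot all_order all_algebra all_field.
Set Implicit Arguments. Unset Strict Implicit. Unset Printing Implicit Defensive.
Import GRing.Theory.
Local Open Scope ring_scope.

Definition wcount (F : finFieldType) (n : nat) (c : 'rV[F]_n) (b : F) : nat :=
  #|[set l : 'I_n | c ord0 l == b]|.

Definition Vvec (F : finFieldType) (alpha : F) (n : nat) (c : 'rV[F]_n) : seq nat :=
  [seq wcount c (alpha ^+ i) | i <- iota 1 #|F|.-1] ++ [:: wcount c 0].

(* Main.v *)
Require Import Defs.
From HB Require Import structures.
From mathcomp Require Import all_boot all_order all_algebra all_field.
Import GRing.Theory.
Local Open Scope ring_scope.

Theorem mainTheorem8 (F : finFieldType) (alpha : F)
  (halpha : (#|F|.-1).-primitive_root alpha)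
  (n k : nat) (C : {vspace 'rV[F]_n}) (hdim : \dim C = k)
  (hV : forall c : 'rV[F]_n, c \in C -> c != 0 -> uniq (Vvec alpha c)) :
  exists r : nat -> nat,
    (exists j : nat, (1 <= j <= #|F|.-1)%N /\ r j <> 0%N) /\
    forall c : 'rV[F]_n, c \in C -> c != 0 ->
      (forall i l : nat, (1 <= i)%N -> (i < l)%N -> (l <= #|F|.-1)%N ->
         \sum_(1 <= j < #|F|) ((r j)%:Z *
            ((wcount c (alpha ^ (i%:Z - j%:Z)))%:Z
             - (wcount c (alpha ^ (l%:Z - j%:Z)))%:Z)) != 0 :> int)
      /\
      (forall l : nat, (1 <= l)%N -> (l <= #|F|.-1)%N ->
         \sum_(1 <= j < #|F|) ((r j)%:Z *
            ((wcount c (alpha ^ (l%:Z - j%:Z)))%:Z - (wcount c 0)%:Z)) != 0 :> int).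
Proof.
have hF1 : (1 < #|F|)%N by apply: card_finNzRing_gt1.
have hN : (0 < #|F|.-1)%N by rewrite -ltnS prednK // ltnW.
have hF : #|F| = (#|F|.-1).+1 by rewrite prednK // ltnW.
have ha1 : alpha ^+ #|F|.-1 = 1 by apply: prim_expr_order.
have hau : alpha \is a GRing.unit.
  rewrite unitfE; apply/eqP => a0; move: ha1; rewrite a0 expr0n.
  by rewrite (negbTE (lt0n_neq0 hN)) => /eqP; rewrite eq_sym oner_eq0.
have key : forall z : nat, alpha ^ (z%:Z - (#|F|.-1)%:Z) = alpha ^+ z.
  by move=> z; rewrite exprzDr // -exprnN ha1 invr1 mulr1.
have hsum : forall X : nat -> int,
    \sum_(1 <= j < #|F|) ((nat_of_bool (j == #|F|.-1))%:Z * X j) = X #|F|.-1.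
  move=> X; rewrite hF big_nat_recr //= big_nat big1 ?add0r.
    by rewrite eqxx mul1r.
  by move=> j /andP[_ hj]; rewrite (ltn_eqF hj) mul0r.
exists (fun j => nat_of_bool (j == #|F|.-1)); split.
  by exists #|F|.-1; rewrite hN leqnn eqxx.
move=> c cC c0.
move: (hV c cC c0); rewrite /Vvec cat_uniq => /and3P[hu hn _].
set s := map _ _ in hu hn.
have Hs : size s = #|F|.-1 by rewrite size_map size_iota.
have Hn : forall i, (1 <= i)%N -> (i <= #|F|.-1)%N ->
    nth 0%N s i.-1 = wcount c (alpha ^+ i).
  move=> i h1 h2; rewrite (nth_map 0%N); last by rewrite size_iota prednK.
  by rewrite nth_iota ?prednK // add1n prednK.
split.
  move=> i l h1 hil hl; rewrite hsum !key subr_eq0 eqz_nat.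
  have hi : (i <= #|F|.-1)%N by rewrite ltnW // (leq_trans hil).
  have h1l : (1 <= l)%N by apply: leq_trans hil.
  rewrite -(Hn i) // -(Hn l) // nth_uniq ?Hs ?prednK //.
    apply/eqP => /(congr1 S); rewrite !prednK // => eil.
    by move: hil; rewrite eil ltnn.
move=> l h1 hl; rewrite hsum !key subr_eq0 eqz_nat.
apply/eqP => e; move: hn; rewrite /= orbF -e -(Hn l) //.
by rewrite mem_nth // Hs prednK.
Qed.
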